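(* For every non-trivial height 1 condition $\Sigma$ there exists a finite graph $\mathbb{G}$ that is not 3-colorable such that $\Sigma$ implies $\Sigma_{\mathbb{G}}$.
   Context: A graph is a structure $(V,E)$ with a single symmetric binary relation $E$ (loops allowed); it is 3-colorable if it admits a homomorphism to the complete loopless graph on three vertices. A clone on a set $A$ is a set of finitary operations on $A$ containing all projections and closed under composition. A height 1 condition is a finite set of identities $f(x_{\pi(1)},\dots,x_{\pi(n)})\approx g(x_{\rho(1)},\dots,x_{\rho(m)})$ (function symbols, arbitrary maps $\pi,\rho$, universally quantified); a clone satisfies it if its symbols can be assigned functions of the clone of the right arities making all identities true. $\Sigma$ implies $\Sigma'$ if every clone satisfying $\Sigma$ satisfies $\Sigma'$; $\Sigma$ is trivial if it is satisfied in every clone (equivalently, in the clone of projections on $\{0,1\}$). For a finite graph $\mathbb{G}=(V,E)$, $\Sigma_{\mathbb{G}}$ is the height 1 condition with a ternary symbol $f_v$ for each $v\in V$, a $6$-ary symbol $g_{(u,v)}$ for each $(u,v)\in E$, and, for each $(u,v)\in E$, the identities $f_u(x,y,z)\approx g_{(u,v)}(x,y,x,z,y,z)$ and $f_v(x,y,z)\approx g_{(u,v)}(y,x,z,x,z,y)$. *)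

(* Defs.v *)
From Stdlib Require List.
From mathcomp Require Import all_boot.
Set Implicit Arguments. Unset Strict Implicit. Unset Printing Implicit Defensive.

Definition op (A : Type) (n : nat) := ('I_n -> A) -> A.

Definition is_clone (A : Type) (C : forall n, op A n -> Prop) : Prop :=
  (forall n (i : 'I_n), C n (fun x => x i)) /\
  (forall n m (f : op A n) (g : 'I_n -> op A m),
      C n f -> (forall i, C m (g i)) -> C m (fun x => f (fun i => g i x))).

(** A height 1 identity  f(x_{pi(1)},...,x_{pi(n)}) ~ g(x_{rho(1)},...,x_{rho(m)})
    over the variables x_0,...,x_{nv-1}. *)
Record h1id (S : Type) (ar : S -> nat) := H1Id {
  lhs : S;
  rhs : S;
  nv : nat;
  pi : 'I_(ar lhs) -> 'I_nv;
  rho : 'I_(ar rhs) -> 'I_nv }.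

Record h1cond := H1Cond {
  h1sym : finType;
  h1ar : h1sym -> nat;
  h1ids : seq (h1id h1ar) }.

Definition satisfies (A : Type) (C : forall n, op A n -> Prop) (Sg : h1cond) : Prop :=
  exists F : forall s : h1sym Sg, op A (h1ar s),
    (forall s, C (h1ar s) (F s)) /\
    (forall e, List.In e (h1ids Sg) ->
       forall x : 'I_(nv e) -> A,
         F (lhs e) (fun i => x (@pi _ _ e i)) = F (rhs e) (fun j => x (@rho _ _ e j))).

Definition h1implies (Sg Sg' : h1cond) : Prop :=
  forall (A : Type) (C : forall n, op A n -> Prop),
    is_clone C -> satisfies C Sg -> satisfies C Sg'.

Definition h1trivial (Sg : h1cond) : Prop :=
  forall (A : Type) (C : forall n, op A n -> Prop), is_clone C -> satisfies C Sg.

(** Finite graphs: a finite vertex type with a symmetric edge relation (loops allowed). *)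
Definition three_colorable (V : finType) (E : rel V) : Prop :=
  exists c : V -> 'I_3, forall u v, E u v -> c u != c v.

Section SigmaG.
Variables (V : finType) (E : rel V).

Definition edgeT := {p : V * V | E p.1 p.2}.

Definition sgG_ar (s : V + edgeT) : nat := if s is inl _ then 3 else 6.

Definition idx3 (l : seq nat) (j : 'I_6) : 'I_3 := inord (nth 0 l j).

Definition sgG_ids_of (e : edgeT) : seq (h1id sgG_ar) :=
  [:: @H1Id _ sgG_ar (inl (val e).1) (inr e) 3 (fun i => i) (idx3 [:: 0; 1; 0; 2; 1; 2]);
      @H1Id _ sgG_ar (inl (val e).2) (inr e) 3 (fun i => i) (idx3 [:: 1; 0; 2; 0; 2; 1])].

Definition SigmaG : h1cond :=
  @H1Cond (V + edgeT)%type sgG_ar (flatten [seq sgG_ids_of e | e <- enum {: edgeT}]).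
End SigmaG.

(* Main.v *)
Require Import Defs.
From mathcomp Require Import all_boot.
From Stdlib Require Import FunctionalExtensionality Classical ClassicalEpsilon.
Set Implicit Arguments. Unset Strict Implicit. Unset Printing Implicit Defensive.
Definition I3 := iota 0 3.
Definition crossl (r r' : nat -> nat) := all (fun t => all (fun t' => (t != t') ==> (r t != r' t')) I3) I3.
Definition constl (r : nat -> nat) := all (fun t => all (fun t' => r t == r t') I3) I3.
Definition mkr (a b c : nat) (t : nat) := match t with 0 => a | 1 => b | _ => c end.
Definition allr (P : (nat -> nat) -> bool) := all (fun a => all (fun b => all (fun c => P (mkr a b c)) I3) I3) I3.
Lemma mat_n : allr (fun r0 => allr (fun r1 => crossl r0 r1 ==> allr (fun r2 => (crossl r0 r2 && crossl r1 r2) ==> ((constl r0 && constl r1) || (all (fun t => r0 t == r1 t) I3 && ~~ constl r0))))).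
Proof. vm_compute. reflexivity. Qed.

Definition o0 : 'I_3 := @Ordinal 3 0 isT.
Definition o1 : 'I_3 := @Ordinal 3 1 isT.
Definition o2 : 'I_3 := @Ordinal 3 2 isT.
Definition nr (r : 'I_3 -> 'I_3) : nat -> nat := mkr (val (r o0)) (val (r o1)) (val (r o2)).

Lemma nr_val r (t : 'I_3) : nr r t = val (r t).
Proof. by case: t => [[|[|[|?]]] Ht] //; rewrite /nr /=; congr (val (r _)); apply: val_inj. Qed.

Lemma allr_I (P : (nat -> nat) -> bool) : allr P -> forall r, P (nr r).
Proof.
move=> H r; move/allP: H => /(_ (val (r o0))); rewrite mem_iota ltn_ord => /(_ isT).
move/allP => /(_ (val (r o1))); rewrite mem_iota ltn_ord => /(_ isT).
move/allP => /(_ (val (r o2))); rewrite mem_iota ltn_ord => /(_ isT).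
done.
Qed.

Lemma crossl_ok (r r' : 'I_3 -> 'I_3) :
  (forall t t', t != t' -> r t != r' t') -> crossl (nr r) (nr r').
Proof.
move=> H; apply/allP => t; rewrite mem_iota add0n => /andP[_ ht].
apply/allP => t'; rewrite mem_iota add0n => /andP[_ ht']; apply/implyP => ne.
have := H (Ordinal ht) (Ordinal ht') ne.
by rewrite -[t]/(val (Ordinal ht)) -[t']/(val (Ordinal ht')) !nr_val.
Qed.

Lemma constl_ok (r : 'I_3 -> 'I_3) : constl (nr r) -> forall t t', r t = r t'.
Proof.
move/allP => H t t'; apply: val_inj; rewrite -!nr_val.
move: (H (val t)); rewrite mem_iota ltn_ord => /(_ isT) /allP /(_ (val t')).
by rewrite mem_iota ltn_ord => /(_ isT) /eqP.
Qed.

Lemma constl_ok' (r : 'I_3 -> 'I_3) : (forall t t', r t = r t') -> constl (nr r).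
Proof.
move=> H; apply/allP => t; rewrite mem_iota add0n => /andP[_ ht].
apply/allP => t'; rewrite mem_iota add0n => /andP[_ ht'].
by rewrite -[t]/(val (Ordinal ht)) -[t']/(val (Ordinal ht')) !nr_val (H (Ordinal ht) (Ordinal ht')).
Qed.

Lemma mat3 (r0 r1 r2 : 'I_3 -> 'I_3) :
  (forall t t', t != t' -> r0 t != r1 t') ->
  (forall t t', t != t' -> r0 t != r2 t') ->
  (forall t t', t != t' -> r1 t != r2 t') ->
  ((forall t t', r0 t = r0 t') /\ (forall t t', r1 t = r1 t')) \/
  ((forall t, r0 t = r1 t) /\ ~ (forall t t', r0 t = r0 t')).
Proof.
move=> H01 H02 H12.
have := allr_I mat_n r0; move/allr_I/(_ r1).
rewrite crossl_ok //= => /allr_I /(_ r2).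
rewrite !crossl_ok //= => /orP [/andP [/constl_ok ? /constl_ok ?]|/andP[Heq Hn]].
  by left.
right; split.
  move=> t; move: Heq => /= /and4P[/eqP e0 /eqP e1 /eqP e2 _].
  case: t => [[|[|[|?]]] Ht] //.
  - by rewrite (_ : Ordinal Ht = o0) //; apply: val_inj.
  - by rewrite (_ : Ordinal Ht = o1) //; apply: val_inj.
  - by rewrite (_ : Ordinal Ht = o2) //; apply: val_inj.
by move/constl_ok'; rewrite (negbTE Hn).
Qed.

Definition vec n := 'I_n -> 'I_3.
Definition perp3 n (a b : vec n) := forall i, a i != b i.
Definition polyK3 n (h : vec n -> 'I_3) := forall a b : vec n, perp3 a b -> h a != h b.

Definition ext n (x : vec n) (t : 'I_3) : vec n.+1 :=
  fun i => if unlift ord_max i is Some j then x j else t.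

Lemma ext_decomp n (a : vec n.+1) : a = ext (fun j => a (lift ord_max j)) (a ord_max).
Proof. by apply: functional_extensionality => i; rewrite /ext; case: unliftP => [j ->|->]. Qed.

Definition av (a b : 'I_3) : 'I_3 :=
  match val a, val b with
  | 0, 0 => o1 | 0, 1 => o2 | 0, _ => o1
  | 1, 0 => o2 | 1, 1 => o2 | 1, _ => o0
  | _, 0 => o1 | _, 1 => o0 | _, _ => o0 end.

Lemma av_ne a b : (av a b != a) && (av a b != b).
Proof. by case: a b => [[|[|[|?]]] ?] [[|[|[|?]]] ?]. Qed.

Lemma poly_unary n (h : vec n -> 'I_3) : polyK3 h ->
  exists k : 'I_n, forall a b : vec n, a k = b k -> h a = h b.
Proof.
elim: n h => [|n IH] h Hp.
  have := Hp (fun _ => o0) (fun _ => o0) (fun i => match i with Ordinal _ p => False_ind _ (notF p) end).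
  by rewrite eqxx.
pose F x t := h (@ext n x t).
have HF : forall x y, perp3 x y -> forall t t', t != t' -> F x t != F y t'.
  move=> x y Hxy t t' Ht; apply: Hp => i; rewrite /ext.
  by case: (unlift ord_max i).
pose rc x := forall t t', F x t = F x t'.
have tri : forall x z, perp3 x z -> (rc x /\ rc z) \/ ((forall t, F x t = F z t) /\ ~ rc x).
  move=> x z Hxz; pose w := fun i => av (x i) (z i).
  apply: (@mat3 (F x) (F z) (F w)).
  - exact: HF.
  - by apply: HF => i; case/andP: (av_ne (x i) (z i)); rewrite eq_sym.
  - by apply: HF => i; case/andP: (av_ne (x i) (z i)) => _; rewrite eq_sym.
pose x0 : vec n := fun _ => o0.
have Hz : forall y, perp3 x0 (fun i => av (x0 i) (y i)) /\ perp3 (fun i => av (x0 i) (y i)) y.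
  by move=> y; split=> i; case/andP: (av_ne (x0 i) (y i)); rewrite // eq_sym.
case: (classic (rc x0)) => Hx0.
  have allrc : forall y, rc y.
    move=> y; have [H1 H2] := Hz y.
    case: (tri _ _ H1) => [[_ Hzc]|[_ //]].
    by case: (tri _ _ H2) => [[_ //]|[_ //]].
  pose g x := F x o0.
  have [k Hk] : exists k : 'I_n, forall a b : vec n, a k = b k -> g a = g b.
    apply: IH => x y Hxy; rewrite /g (allrc y o0 o1); exact: HF.
  exists (lift ord_max k) => a b Hab.
  rewrite (ext_decomp a) (ext_decomp b).
  rewrite -/(F _ (a ord_max)) -/(F _ (b ord_max)) (allrc _ _ o0) (allrc _ (b ord_max) o0).
  exact: Hk.
have allrow : forall y t, F y t = F x0 t.
  move=> y t; have [H1 H2] := Hz y.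
  case: (tri _ _ H1) => [[//]|[Heq _]].
  case: (tri _ _ H2) => [[Hc _]|[Heq' _]].
    by exfalso; apply: Hx0 => u v; rewrite !Heq.
  by rewrite -Heq' -Heq.
exists ord_max => a b Hab.
rewrite (ext_decomp a) (ext_decomp b).
by rewrite -/(F _ (a ord_max)) -/(F _ (b ord_max)) !allrow Hab.
Qed.

Definition Vt (Sg : h1cond) : finType := {s : h1sym Sg & {ffun 'I_(h1ar s) -> 'I_3}}.
Definition p1 := idx3 [:: 0; 1; 0; 2; 1; 2].
Definition p2 := idx3 [:: 1; 0; 2; 0; 2; 1].
Definition sw (j : 'I_6) : 'I_6 := inord (nth 0 [:: 1; 0; 3; 2; 5; 4] j).
Lemma p1sw j : p1 (sw j) = p2 j.
Proof. by case: j => [[|[|[|[|[|[|?]]]]]] ?] //; apply: val_inj; rewrite /p1 /p2 /sw /idx3 /= ?inordK. Qed.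
Lemma p2sw j : p2 (sw j) = p1 j.
Proof. by case: j => [[|[|[|[|[|[|?]]]]]] ?] //; apply: val_inj; rewrite /p1 /p2 /sw /idx3 /= ?inordK. Qed.
Definition mk6 (k : nat) : 'I_6 := inord k.
Definition sel (t t' : 'I_3) : 'I_6 :=
  match val t, val t' with
  | 0, 1 => mk6 0 | 1, 0 => mk6 1 | 0, 2 => mk6 2 | 2, 0 => mk6 3
  | 1, 2 => mk6 4 | 2, 1 => mk6 5 | _, _ => mk6 0 end.
Lemma sel_ok t t' : t != t' -> p1 (sel t t') = t /\ p2 (sel t t') = t'.
Proof.
by case: t t' => [[|[|[|?]]] ?] [[|[|[|?]]] ?] //= _; split; apply: val_inj;
  rewrite /p1 /p2 /sel /mk6 /idx3 /= ?inordK.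
Qed.

Definition sat_ids (Sg : h1cond) (A : Type) (F : forall s : h1sym Sg, op A (h1ar s)) :=
  forall e, List.In e (h1ids Sg) -> forall x : 'I_(nv e) -> A,
    F (lhs e) (fun i => x (@Defs.pi _ _ e i)) = F (rhs e) (fun j => x (@rho _ _ e j)).

Definition eqv (Sg : h1cond) k (s1 : h1sym Sg) (f1 : 'I_(h1ar s1) -> 'I_k)
  (s2 : h1sym Sg) (f2 : 'I_(h1ar s2) -> 'I_k) : Prop :=
  forall (A : Type) (F : forall s : h1sym Sg, op A (h1ar s)), sat_ids F ->
    forall x : 'I_k -> A, F s1 (fun i => x (f1 i)) = F s2 (fun i => x (f2 i)).

Definition eqvV Sg (u : Vt Sg) s (f : 'I_(h1ar s) -> 'I_3) := eqv (tagged u) f.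

Definition Pe Sg (u v : Vt Sg) := exists s (tau : 'I_(h1ar s) -> 'I_6),
  eqvV u (fun i => p1 (tau i)) /\ eqvV v (fun i => p2 (tau i)).

Definition Ed Sg : rel (Vt Sg) := fun u v =>
  if excluded_middle_informative (Pe u v \/ Pe v u) then true else false.

Lemma Ed_sym Sg : symmetric (@Ed Sg).
Proof.
move=> u v; rewrite /Ed.
by case: excluded_middle_informative => H1; case: excluded_middle_informative => H2 //; exfalso; tauto.
Qed.

Lemma EdP Sg (u v : Vt Sg) : Ed u v -> Pe u v \/ Pe v u.
Proof. by rewrite /Ed; case: excluded_middle_informative. Qed.

Lemma PEd Sg (u v : Vt Sg) : Pe u v -> Ed u v.
Proof. move=> H; rewrite /Ed; case: excluded_middle_informative => // HN; exfalso; apply: HN; by left. Qed.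

Definition eqV Sg (u v : Vt Sg) := eqv (tagged u) (tagged v).

Lemma Ed_trans Sg (u v w : Vt Sg) : eqV u v -> Ed w u -> Ed w v.
Proof.
move=> Huv /EdP [[s [tau [Hw Hu]]]|[s [tau [Hu Hw]]]].
  apply: PEd; exists s, tau; split => // A F HF x; exact: (eq_trans (esym (Huv A F HF x)) (Hu A F HF x)).
rewrite Ed_sym; apply: PEd.
exists s, tau; split => // A F HF x; exact: (eq_trans (esym (Huv A F HF x)) (Hu A F HF x)).
Qed.

Definition mkV Sg (s : h1sym Sg) (a : 'I_(h1ar s) -> 'I_3) : Vt Sg :=
  existT _ s [ffun i => a i].

Lemma Ed_edge Sg (s : h1sym Sg) (a b : 'I_(h1ar s) -> 'I_3) :
  (forall i, a i != b i) -> Ed (mkV a) (mkV b).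
Proof.
move=> Hab; apply: PEd; exists s, (fun i => sel (a i) (b i)).
split => A F _ x /=; congr (F s _); apply: functional_extensionality => i;
  rewrite ffunE; case: (sel_ok (Hab i)) => e1 e2; by rewrite ?e1 ?e2.
Qed.

Lemma in_cat_or (U : Type) (s1 s2 : seq U) y : List.In y (s1 ++ s2) -> List.In y s1 \/ List.In y s2.
Proof. elim: s1 => [|a s1 IH] /=; first by right. case=> [->|/IH [H|H]]; tauto. Qed.

Lemma in_flat (T U : Type) (f : T -> seq U) (l : seq T) y :
  List.In y (flatten [seq f x | x <- l]) -> exists x, List.In y (f x).
Proof. elim: l => [|a l IH] //= H; case: (in_cat_or H) => [H1|/IH //]; by exists a. Qed.

Lemma implies_G Sg : h1implies Sg (SigmaG (@Ed Sg)).
Proof.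
move=> A C [Hproj Hcomp] [F [HFC HFid]].
pose fu (u : Vt Sg) : op A 3 := fun x => F (tag u) (fun i => x (tagged u i)).
have Hfu : forall u, C 3 (fu u).
  move=> u; exact: (Hcomp _ 3 (F (tag u)) (fun i (x : 'I_3 -> A) => x (tagged u i)) (HFC _) (fun i => Hproj 3 _)).
have Hg : forall e : edgeT (@Ed Sg), exists g : op A 6, C 6 g /\
    (forall x, fu (val e).1 x = g (fun j => x (p1 j))) /\ (forall x, fu (val e).2 x = g (fun j => x (p2 j))).
  case=> [[u v] He] /=; case: (EdP He) => [[s [tau [Hu Hv]]]|[s [tau [Hv Hu]]]].
  - exists (fun w => F s (fun i => w (tau i))); split.
      exact: (Hcomp _ 6 (F s) (fun i (w : 'I_6 -> A) => w (tau i)) (HFC _) (fun i => Hproj 6 _)).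
    split => x; [exact: (Hu A F HFid x) | exact: (Hv A F HFid x)].
  - exists (fun w => F s (fun i => w (sw (tau i)))); split.
      exact: (Hcomp _ 6 (F s) (fun i (w : 'I_6 -> A) => w (sw (tau i))) (HFC _) (fun i => Hproj 6 _)).
    split => x /=.
      rewrite /fu (Hu A F HFid x); congr (F s _); apply: functional_extensionality => i; by rewrite p1sw.
    rewrite /fu (Hv A F HFid x); congr (F s _); apply: functional_extensionality => i; by rewrite p2sw.
have [G HG] : exists G : forall e : edgeT (@Ed Sg), op A 6, forall e, C 6 (G e) /\
    (forall x, fu (val e).1 x = G e (fun j => x (p1 j))) /\ (forall x, fu (val e).2 x = G e (fun j => x (p2 j))).
  exists (fun e => proj1_sig (constructive_indefinite_description _ (Hg e))).
  move=> e; exact: (proj2_sig (constructive_indefinite_description _ (Hg e))).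
exists (fun s => match s return op A (@sgG_ar _ (@Ed Sg) s) with inl u => fu u | inr e => G e end).
split.
  by case=> [u|e] /=; [exact: Hfu | case: (HG e)].
move=> e0 Hin.
have [y Hy] := in_flat Hin.
move: Hy; rewrite /sgG_ids_of /= => [[<-|[<-|[]]]] x /=.
  exact: (proj1 (proj2 (HG y)) x).
exact: (proj2 (proj2 (HG y)) x).
Qed.

Definition nx (t : 'I_3) : 'I_3 := av t t.
Lemma nx_ok t : [&& nx t != t, nx (nx t) != t & nx (nx t) != nx t].
Proof. by case: t => [[|[|[|?]]] ?]. Qed.
Lemma nx1 t : nx t != t. Proof. by case/and3P: (nx_ok t). Qed.
Lemma nx2 t : nx (nx t) != t. Proof. by case/and3P: (nx_ok t). Qed.

Lemma pig (x y z w : 'I_3) : x != y -> x != z -> y != z -> w != y -> w != z -> w = x.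
Proof.
by case: x y z w => [[|[|[|?]]] ?] [[|[|[|?]]] ?] [[|[|[|?]]] ?] [[|[|[|?]]] ?] //= *; apply: val_inj.
Qed.

Lemma not_col Sg : ~ h1trivial Sg -> ~ three_colorable (@Ed Sg).
Proof.
move=> HnT [c Hc]; apply: HnT.
have Hpoly : forall s, polyK3 (fun a : vec (h1ar s) => c (@mkV Sg s a)).
  move=> s a b Hab; exact: Hc _ _ (Ed_edge Hab).
have Hk : forall s, exists k : 'I_(h1ar s), forall a b : vec (h1ar s), a k = b k -> c (@mkV Sg s a) = c (@mkV Sg s b).
  move=> s; exact: poly_unary (Hpoly s).
pose kf s := proj1_sig (constructive_indefinite_description _ (Hk s)).
have Hkf : forall s (a b : vec (h1ar s)), a (kf s) = b (kf s) -> c (@mkV Sg s a) = c (@mkV Sg s b).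
  move=> s; exact: (proj2_sig (constructive_indefinite_description _ (Hk s))).
have key : forall e, List.In e (h1ids Sg) -> Defs.pi (kf (lhs e)) = rho (kf (rhs e)).
  move=> e He; case: (eqVneq (Defs.pi (kf (lhs e))) (rho (kf (rhs e)))) => // Hne; exfalso.
  pose psi t := c (@mkV Sg (lhs e) (fun _ => t)).
  have psi_inj : forall t t', t != t' -> psi t != psi t'.
    by move=> t t' H; apply: Hpoly => i.
  have Heqv : forall a : 'I_(nv e) -> 'I_3,
      eqV (@mkV Sg (lhs e) (fun m => a (Defs.pi m))) (@mkV Sg (rhs e) (fun m => a (rho m))).
    move=> a A F HF x /=.
    have E1 : (fun i => x ([ffun i0 => a (Defs.pi i0)] i)) = (fun i => (fun m => x (a m)) (Defs.pi i)).
      by apply: functional_extensionality => i; rewrite ffunE.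
    have E2 : (fun i => x ([ffun i0 => a (rho i0)] i)) = (fun i => (fun m => x (a m)) (rho i)).
      by apply: functional_extensionality => i; rewrite ffunE.
    rewrite E1 E2; exact: (HF e He (fun m => x (a m))).
  have Hr : forall a : 'I_(nv e) -> 'I_3,
      c (@mkV Sg (rhs e) (fun m => a (rho m))) = psi (a (Defs.pi (kf (lhs e)))).
    move=> a.
    set i := Defs.pi (kf (lhs e)).
    have hv := fun (b : 'I_(nv e) -> 'I_3) (Hb : forall m, b m != a m) =>
      Hc _ _ (Ed_trans (Heqv a) (@Ed_edge Sg (lhs e) (fun m => b (Defs.pi m)) _ (fun m => Hb _))).
    have hw := fun b : 'I_(nv e) -> 'I_3 => Hkf (lhs e) (fun m => b (Defs.pi m)) (fun _ => b i) erefl.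
    have h1 : psi (nx (a i)) != c (@mkV Sg (rhs e) (fun m => a (rho m))).
      rewrite /psi -(hw (fun m => nx (a m))); exact: hv (fun m => nx (a m)) (fun m => nx1 (a m)).
    have h2 : psi (nx (nx (a i))) != c (@mkV Sg (rhs e) (fun m => a (rho m))).
      rewrite /psi -(hw (fun m => nx (nx (a m)))); exact: hv (fun m => nx (nx (a m))) (fun m => nx2 (a m)).
    case/and3P: (nx_ok (a i)) => n1 n2 n3.
    apply: (pig (y:=psi (nx (a i))) (z:=psi (nx (nx (a i))))).
    - by apply: psi_inj; rewrite eq_sym.
    - by apply: psi_inj; rewrite eq_sym.
    - by apply: psi_inj; rewrite eq_sym.
    - by rewrite eq_sym.
    - by rewrite eq_sym.
  have := Hr (fun _ => o0); have := Hr (fun m => if m == Defs.pi (kf (lhs e)) then o1 else o0).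
  rewrite /= eqxx => H1 H0.
  move: (psi_inj o1 o0 isT); rewrite -H1 -H0; apply/negP; rewrite negbK; apply/eqP.
  apply: Hkf; by rewrite eq_sym (negbTE Hne).
move=> A C [Hproj _]; exists (fun s (x : 'I_(h1ar s) -> A) => x (kf s)); split => [s|e He x].
  exact: Hproj.
by rewrite /= (key e He).
Qed.

Theorem corollary3p6 :
  forall Sg : h1cond, ~ h1trivial Sg ->
  exists (V : finType) (E : rel V),
    symmetric E /\ ~ three_colorable E /\ h1implies Sg (SigmaG E).
Proof.
move=> Sg HnT; exists (Vt Sg), (@Ed Sg); split; first exact: Ed_sym.
split; [exact: not_col | exact: implies_G].
Qed.
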